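(* Let $\Gamma$ be a topological group, $A$ a regular CW-complex, and $\mathcal I$ a cellular $(\Gamma,A)$-groupoid. Then for any topological group $G$: (a) the restriction maps $\mathrm{res}_0\colon\mathrm{Rep}^G_{\mathrm{cell}}(\mathcal I)\to\mathrm{Rep}^G_{\mathrm{cell}}(\mathcal I^{(0)})$ and $\mathrm{res}_0\colon\overline{\mathrm{Rep}}^{\,G}_{\mathrm{cell}}(\mathcal I)\to\overline{\mathrm{Rep}}^{\,G}_{\mathrm{cell}}(\mathcal I^{(0)})$ are injective; (b) the restriction maps $\mathrm{res}_1\colon\mathrm{Rep}^G_{\mathrm{cell}}(\mathcal I)\to\mathrm{Rep}^G_{\mathrm{cell}}(\mathcal I^{(1)})$ and $\mathrm{res}_1\colon\overline{\mathrm{Rep}}^{\,G}_{\mathrm{cell}}(\mathcal I)\to\overline{\mathrm{Rep}}^{\,G}_{\mathrm{cell}}(\mathcal I^{(1)})$ are bijective.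
   Context: A CW-complex $A$ is regular if each cell $e$ has a characteristic map $\sigma_e\colon\mathbb D^{d(e)}\to A$ which is an embedding sending $\mathbb S^{d(e)-1}$ onto a subcomplex. For $a\in A$, $e(a)$ is the cell whose open cell contains $a$; $f\le e$ means $f$ is a face of $e$. A $(\Gamma,A)$-groupoid is a subspace $\mathcal I\subset\Gamma\times A$ with $\mathcal I\cap(\Gamma\times\{a\})=\tilde{\mathcal I}_a\times\{a\}$, $\tilde{\mathcal I}_a$ a closed subgroup (identified with $\mathcal I_a$). It is cellular if $\mathcal I_a=\mathcal I_b$ whenever $e(a)=e(b)$ (write $\mathcal I(e)$) and it is locally maximal (for each $a$ and neighbourhood $B$ of $a$ there is an open $U$, $a\in U\subset B$, and a homotopy $\rho_t\colon U\to U$ with $\rho_0=\mathrm{id}$, $\rho_1\equiv a$, $\mathcal I_u\subset\mathcal I_{\rho_t(u)}$); then $\mathcal I(e)\subset\mathcal I(f)$ for $f\le e$. $\mathcal I^{(k)}$ denotes the restriction of $\mathcal I$ over the $k$-skeleton $A^{(k)}$ (a cellular groupoid over $A^{(k)}$). A cellular representation of $\mathcal I$ in $G$ is a continuous map $\beta\colon\mathcal I\to G$, restricting to homomorphisms on each $\mathcal I_a$, with $\beta_a=\beta_b$ whenever $e(a)=e(b)$; equivalently a family $\beta_e\in\mathrm{Hom}(\mathcal I(e),G)$ with $\beta_e=\beta_f|_{\mathcal I(e)}$ for $f\le e$. Two are conjugate if $\beta'=g^{-1}\beta g$ for a single $g\in G$. $\mathrm{Rep}^G_{\mathrm{cell}}(\mathcal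 I)$ is the set of conjugacy classes of cellular representations. With $\overline{\mathrm{Hom}}(K,G)$ the set of $G$-conjugacy classes of continuous homomorphisms $K\to G$, $\overline{\mathrm{Rep}}^{\,G}_{\mathrm{cell}}(\mathcal I)$ is the set of families $(b_e)_e$ with $b_e\in\overline{\mathrm{Hom}}(\mathcal I(e),G)$ and $b_e=b_f|_{\mathcal I(e)}$ whenever $f\le e$. The same definitions apply to $\mathcal I^{(k)}$ over $A^{(k)}$, and $\mathrm{res}_k$ denotes restriction to cells of $A^{(k)}$. *)

(* Defs.v *)
From HB Require Import structures.
From mathcomp Require Import all_boot all_order all_algebra.
From mathcomp Require Import all_classical all_reals all_analysis.
From mathcomp Require Import Rstruct Rstruct_topology.

Set Implicit Arguments.
Unset Strict Implicit.
Unset Printing Implicit Defensive.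

Import Order.TTheory GRing.Theory Num.Theory.
Local Open Scope classical_set_scope.
Local Open Scope ring_scope.

Notation RR := Rdefinitions.R.

Record topGroup := TopGroup {
  tg_sort :> topologicalType;
  tg_mul : tg_sort -> tg_sort -> tg_sort;
  tg_inv : tg_sort -> tg_sort;
  tg_one : tg_sort;
  tg_mulA : forall x y z, tg_mul x (tg_mul y z) = tg_mul (tg_mul x y) z;
  tg_mul1 : forall x, tg_mul tg_one x = x;
  tg_mulV : forall x, tg_mul (tg_inv x) x = tg_one;
  tg_mul_cont : continuous (fun p : tg_sort * tg_sort => tg_mul p.1 p.2);
  tg_inv_cont : continuous tg_inv }.

Arguments tg_mul {_}. Arguments tg_inv {_}. Arguments tg_one {_}.

Definition closed_subgroup (Gm : topGroup) (H : set Gm) : Prop :=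
  [/\ H tg_one,
      (forall x y, H x -> H y -> H (tg_mul x y)),
      (forall x, H x -> H (tg_inv x)) & closed H].

(* Closed unit disk D^d, its boundary sphere S^(d-1) and the open disk in R^d
   (row vectors, Euclidean norm). *)
Definition sqnorm d (x : 'rV[RR]_d) : RR := \sum_(i < d) (x ord0 i) ^+ 2.
Definition disk d : set 'rV[RR]_d := [set x | sqnorm x <= 1].
Definition sphere d : set 'rV[RR]_d := [set x | sqnorm x = 1].
Definition odisk d : set 'rV[RR]_d := [set x | sqnorm x < 1].
Arguments disk : clear implicits.
Arguments sphere : clear implicits.
Arguments odisk : clear implicits.

Unset Implicit Arguments.
Section CW.
Context {A : topologicalType} {E : Type} {dim : E -> nat}
        (sig : forall e, 'rV[RR]_(dim e) -> A).

Definition ocell (e : E) : set A := sig e @` odisk (dim e).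
Definition ccell (e : E) : set A := sig e @` disk (dim e).

Definition is_CW : Prop :=
  [/\ hausdorff_space A,
      (forall a, exists e, ocell e a /\ forall e', ocell e' a -> e' = e),
      (* characteristic maps: continuous on the closed disk, and a
         homeomorphism of the open disk onto the open cell *)
      [/\ (forall e, {within disk (dim e), continuous (sig e)}),
          (forall e x y, odisk (dim e) x -> odisk (dim e) y ->
                         sig e x = sig e y -> x = y) &
          (forall e U, open U -> exists V, open V /\
             sig e @` (U `&` odisk (dim e)) = V `&` ocell e)],
      (forall e x, sphere (dim e) x ->
         exists f, (dim f < dim e)%N /\ ocell f (sig e x)) /\
      (forall e, finite_set [set f | (sig e @` sphere (dim e) `&` ocell f) !=set0])
    &
      (forall C : set A, closed C <->
         forall e, closed (disk (dim e) `&` sig e @^-1` C))].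

Definition subcomplex (S : set A) : Prop :=
  closed S /\ exists F : set E, S = \bigcup_(f in F) ocell f.

Definition is_regular_CW : Prop :=
  [/\ is_CW,
      (forall e x y, disk (dim e) x -> disk (dim e) y ->
                     sig e x = sig e y -> x = y),
      (forall e U, open U -> exists V, open V /\
         sig e @` (U `&` disk (dim e)) = V `&` ccell e)
    & (forall e, subcomplex (sig e @` sphere (dim e)))].

Definition face (f e : E) : Prop := ocell f `<=` closure (ocell e).

Context {Gam : topGroup}.

Definition fiber (I : set (Gam * A)) (a : A) : set Gam := [set g | I (g, a)].

Definition groupoid (I : set (Gam * A)) : Prop :=
  forall a, closed_subgroup (fiber I a).

Definition locally_maximal (I : set (Gam * A)) : Prop :=
  forall (a : A) (B : set A), nbhs a B ->
    exists U : set A, [/\ open U, U a, U `<=` B &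
      exists rho : RR -> A -> A,
        [/\ {within [set p : RR * A | 0 <= p.1 <= 1 /\ U p.2],
              continuous (fun p : RR * A => rho p.1 p.2)},
            (forall t u, 0 <= t <= 1 -> U u -> U (rho t u)),
            (forall u, U u -> rho 0 u = u),
            (forall u, U u -> rho 1 u = a) &
            (forall t u, 0 <= t <= 1 -> U u -> fiber I u `<=` fiber I (rho t u))]].

Definition cellular_groupoid (I : set (Gam * A)) : Prop :=
  [/\ groupoid I,
      (forall e a b, ocell e a -> ocell e b -> fiber I a = fiber I b)
    & locally_maximal I].

Definition Icell (I : set (Gam * A)) (e : E) : set Gam :=
  [set g | exists a, ocell e a /\ I (g, a)].

(* Representations in G.  A set of cells P (a skeleton) determines the
   restricted groupoid over the corresponding subcomplex. *)
Context {G : topGroup}.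

Definition cont_hom (H : set Gam) (phi : Gam -> G) : Prop :=
  (forall x y, H x -> H y -> phi (tg_mul x y) = tg_mul (phi x) (phi y)) /\
  {within H, continuous phi}.

Definition hom_conj (H : set Gam) (phi psi : Gam -> G) : Prop :=
  exists g : G, forall x, H x -> psi x = tg_mul (tg_mul (tg_inv g) (phi x)) g.

Definition cell_rep (I : set (Gam * A)) (P : E -> Prop) (beta : E -> Gam -> G)
  : Prop :=
  (forall e, P e -> cont_hom (Icell I e) (beta e)) /\
  (forall f e, P f -> P e -> face f e ->
     forall x, Icell I e x -> beta e x = beta f x).

Definition rep_conj (I : set (Gam * A)) (P : E -> Prop) (beta beta' : E -> Gam -> G)
  : Prop :=
  exists g : G, forall e, P e -> forall x, Icell I e x ->
    beta' e x = tg_mul (tg_mul (tg_inv g) (beta e x)) g.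

(* elements of \bar{Rep}: families (b_e) of conjugacy classes, given by
   representatives b e, compatible under restriction to faces *)
Definition bar_rep (I : set (Gam * A)) (P : E -> Prop) (b : E -> Gam -> G)
  : Prop :=
  (forall e, P e -> cont_hom (Icell I e) (b e)) /\
  (forall f e, P f -> P e -> face f e -> hom_conj (Icell I e) (b f) (b e)).

Definition bar_eq (I : set (Gam * A)) (P : E -> Prop) (b b' : E -> Gam -> G)
  : Prop :=
  forall e, P e -> hom_conj (Icell I e) (b e) (b' e).

End CW.

Definition allcells {E : Type} : E -> Prop := fun _ => True.
Definition skel {E : Type} (dim : E -> nat) (k : nat) : E -> Prop :=
  fun e => (dim e <= k)%N.

(* Main.v *)
Require Import Defs.
From HB Require Import structures.
From mathcomp Require Import all_boot all_order all_algebra.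
From mathcomp Require Import all_classical all_reals all_analysis.
From mathcomp Require Import Rstruct Rstruct_topology.

Local Open Scope classical_set_scope.

From mathcomp Require Import ring lra.

Module Aux.
Import Order.TTheory GRing.Theory Num.Theory numFieldNormedType.Exports.
Local Open Scope classical_set_scope.
Local Open Scope ring_scope.








Lemma cont_sum (R : realType) (T : topologicalType) (J : Type) (r : seq J) (f : J -> T -> R) :
  (forall i, continuous (f i)) -> continuous (fun x => \sum_(i <- r) f i x).
Proof.
move=> fc; elim: r => [|a r IH] /=.
  under eq_fun do rewrite big_nil; exact: cst_continuous.
under eq_fun do rewrite big_cons.
by move=> x; apply: continuousD; [exact: fc|exact: IH].
Qed.

Lemma sqnorm_cont n : continuous (@sqnorm n).
Proof.
rewrite /sqnorm; apply: cont_sum => i x.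
apply: continuousM; exact: coord_continuous.
Qed.

Lemma sqnorm_ge0 n (x : 'rV[RR]_n) : 0 <= sqnorm x.
Proof. by apply: sumr_ge0 => i _; exact: sqr_ge0. Qed.

Lemma sqnorm0 n : sqnorm (0 : 'rV[RR]_n) = 0.
Proof. by apply: big1 => i _; rewrite mxE expr0n. Qed.

Lemma odisk0 n : odisk n 0.
Proof. by rewrite /odisk /= sqnorm0 ltr01. Qed.

Lemma disk_closed n : closed (disk n).
Proof.
have -> : disk n = (@sqnorm n) @^-1` [set x : RR | x <= 1] by [].
apply: preimage_closed; last exact: closed_le.
by move=> x _; exact: sqnorm_cont.
Qed.

Lemma coord_le n (x : 'rV[RR]_n) i : (x ord0 i) ^+ 2 <= sqnorm x.
Proof.
rewrite /sqnorm (bigD1 i) //= lerDl.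
by apply: sumr_ge0 => j _; exact: sqr_ge0.
Qed.

Lemma disk_compact n : compact (disk n).
Proof.
have Mnco : compact [set v : 'rV[RR]_n | forall i, `[(-1 : RR), 1]%classic (v ord0 i)].
  by apply: (@rV_compact _ _ (fun=> `[(-1 : RR), 1]%classic)) => _; exact: segment_compact.
apply: subclosed_compact (disk_closed n) Mnco _ => v dv i /=.
rewrite in_itv /= -ler_norml -(@ler_pXn2r _ 2) ?nnegrE ?normr_ge0 //.
by rewrite expr1n real_normK ?num_real // (le_trans (coord_le _ v i)).
Qed.

Lemma sqnormZ n (t : RR) (x : 'rV[RR]_n) : sqnorm (t *: x) = t ^+ 2 * sqnorm x.
Proof.
by rewrite /sqnorm mulr_sumr; apply: eq_bigr => i _; rewrite mxE exprMn.
Qed.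

Lemma cvg_t (R : realType) : (fun k => 1 - harmonic k / 2 : R) @ \oo --> (1:R).
Proof.
have h1 : (fun k => harmonic k * (2:R)^-1) @ \oo --> (0 * 2^-1 : R).
  exact: cvgMr_tmp (@cvg_harmonic R).
rewrite mul0r in h1.
have := cvgB (cvg_cst (1:R)) h1.
rewrite subr0 => h; exact: h.
Qed.

Lemma disk_cl n : disk n `<=` closure (odisk n).
Proof.
move=> x dx.
pose t k : RR := 1 - harmonic k / 2.
have ht : t @ \oo --> (1 : RR) := cvg_t RR.
have hx : (fun k => t k *: x) @ \oo --> x.
  have := @cvgZr_tmp _ _ _ _ _ t 1 x ht; rewrite scale1r => h; exact: h.
apply: (closed_cvg (closure (odisk n)) (@closed_closure _ (odisk n)) _ x hx).
apply: nearW => k; apply: subset_closure; rewrite /odisk /= sqnormZ.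
have hk : harmonic k <= 1 :> RR.
  by rewrite /harmonic /= invf_le1 ?ler1n ?ltr0n.
have hk0 : 0 < harmonic k :> RR := harmonic_gt0 k.
have t0 : 0 <= t k by rewrite /t; lra.
have t1 : t k < 1 by rewrite /t; lra.
apply: (le_lt_trans (ler_wpM2l (sqr_ge0 _) dx)); rewrite mulr1.
move: t0 t1; set u := t k; move=> t0 t1; rewrite expr2; nra.
Qed.

Definition ip n (a b : 'rV[RR]_n) : RR := \sum_(i < n) a ord0 i * b ord0 i.
Arguments ip {n}.

Lemma seg_sq n (a b : 'rV[RR]_n) (t : RR) :
  sqnorm ((1 - t) *: a + t *: b) =
  (1 - t) ^+ 2 * sqnorm a + t ^+ 2 * sqnorm b + 2 * t * (1 - t) * ip a b.
Proof.
rewrite /sqnorm /ip !mulr_sumr -!big_split /=; apply: eq_bigr => i _.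
rewrite !mxE; ring.
Qed.

Lemma ip_le1 n (a b : 'rV[RR]_n) : sqnorm a = 1 -> sqnorm b = 1 -> ip a b <= 1.
Proof.
move=> sa sb; have := sqnorm_ge0 _ (a - b).
have -> : sqnorm (a - b) = sqnorm a + sqnorm b - 2 * ip a b.
  rewrite /sqnorm /ip mulr_sumr -big_split -sumrB /=; apply: eq_bigr => i _.
  rewrite !mxE; ring.
rewrite sa sb; lra.
Qed.

Definition sqn (R : realType) n (x : 'rV[R]_n) : R := \sum_(i < n) (x ord0 i) ^+ 2.
Arguments sqn {R n}.

Lemma gcont (R : realType) n (a b : 'rV[R]_n) :
  (forall t, 0 < sqn ((1 - t) *: a + t *: b)) ->
  continuous (fun t : R => (Num.sqrt (sqn ((1 - t) *: a + t *: b)))^-1 *: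
             ((1 - t) *: a + t *: b)).
Proof.
move=> s0.
have yc : continuous (fun t : R => (1 - t) *: a + t *: b).
  move=> t; apply: (@continuousD _ _ _ (fun t : R => (1 - t) *: a) (fun t : R => t *: b)).
    apply: continuousZr_tmp; apply: continuousB; [exact: cst_continuous|exact: cvg_id].
  by apply: continuousZr_tmp; exact: cvg_id.
have sqc : continuous (@sqn R n).
  move=> x; rewrite /sqn; apply: cont_sum => i y.
  apply: continuousM; exact: coord_continuous.
move=> t; apply: (@continuousZ _ _ _ (fun t : R => (Num.sqrt (sqn ((1 - t) *: a + t *: b)))^-1) (fun t : R => (1 - t) *: a + t *: b)); last exact: yc.
apply: continuousV; first by rewrite sqrtr_eq0 -ltNge s0.
apply: continuous_comp; last exact: sqrt_continuous.
by apply: continuous_comp; [exact: yc|exact: sqc].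
Qed.

Lemma path_conn n (a b : 'rV[RR]_n) : sphere n a -> sphere n b -> -1 < ip a b ->
  exists S, [/\ connected S, S `<=` sphere n, S a & S b].
Proof.
rewrite /sphere /= => sa sb c1.
pose y (t : RR) := (1 - t) *: a + t *: b.
pose s t := sqnorm (y t).
have sE t : s t = (1 + ip a b) / 2 + (1 - ip a b) * (1 - 2 * t) ^+ 2 / 2.
  by rewrite /s /y seg_sq sa sb; field.
have s0 t : 0 < s t.
  have cle := ip_le1 _ _ _ sa sb.
  rewrite sE; move: c1 cle; set c := ip a b => c1 cle; have h : 0 <= (1 - c) * (1 - 2 * t) ^+ 2.
    by apply: mulr_ge0; [rewrite subr_ge0|exact: sqr_ge0].
  move: h; set q := (1 - c) * _ => h; lra.
pose g t := (Num.sqrt (s t))^-1 *: y t.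
have gs t : sqnorm (g t) = 1.
  rewrite /g sqnormZ -/(s t) exprVn sqr_sqrtr ?mulVf //; first exact: lt0r_neq0.
  exact: ltW.
have y0 : y 0 = a by rewrite /y subr0 scale1r scale0r addr0.
have y1 : y 1 = b by rewrite /y subrr scale0r scale1r add0r.
have g0 : g 0 = a by rewrite /g /s y0 sa sqrtr1 invr1 scale1r.
have g1 : g 1 = b by rewrite /g /s y1 sb sqrtr1 invr1 scale1r.
have gc : continuous g.
  have := @gcont RR n a b.
  have -> : (fun t : RR => (Num.sqrt (sqn ((1 - t) *: a + t *: b)))^-1 *:
             ((1 - t) *: a + t *: b)) = g by [].
  apply; exact: s0.
exists (g @` `[0, 1]%classic); split.
- apply: connected_continuous_connected; first exact: segment_connected.
  exact: continuous_subspaceT.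
- by move=> _ [t _ <-]; exact: gs.
- by exists 0 => //; rewrite /= in_itv /= lexx ler01.
- by exists 1 => //; rewrite /= in_itv /= lexx ler01.
Qed.

Definition ev n (k : 'I_n) : 'rV[RR]_n := \row_j ((j == k)%:R).
Arguments ev {n}.

Lemma ip_ev n (k : 'I_n) (q : 'rV[RR]_n) : ip (ev k) q = q ord0 k.
Proof.
rewrite /ip (bigD1 k) //= big1 ?addr0; first by rewrite mxE eqxx mul1r.
by move=> j /negbTE jk; rewrite mxE jk mul0r.
Qed.

Lemma ipC n (a b : 'rV[RR]_n) : ip a b = ip b a.
Proof. by apply: eq_bigr => i _; rewrite mulrC. Qed.

Lemma sqnorm_ip n (a : 'rV[RR]_n) : sqnorm a = ip a a.
Proof. by apply: eq_bigr => i _; rewrite expr2. Qed.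

Lemma ev_sphere n (k : 'I_n) : sphere n (ev k).
Proof. by rewrite /sphere /= sqnorm_ip ip_ev mxE eqxx. Qed.

Lemma sphere_conn n : (2 <= n)%N -> connected (sphere n).
Proof.
case: n => [|[|m]] // _.
pose k1 : 'I_m.+2 := @Ordinal m.+2 1 isT.
pose p := ev (@ord0 m.+1); pose r := ev k1.
suff : sphere m.+2 `<=` connected_component (sphere m.+2) p.
  move=> h.
  have -> : sphere m.+2 = connected_component (sphere m.+2) p.
    by apply/seteqP; split => //; exact: connected_component_sub.
  exact: component_connected.
move=> q sq.
have [q0|q0] := ltrP (-1) (q ord0 ord0).
  have hpq : -1 < ip p q by rewrite /p ip_ev.
  have [S [cS sS Sp Sq]] := @path_conn _ p q (ev_sphere _ _) sq hpq.
  by exists S.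
have q1 : q ord0 k1 = 0.
  have := coord_le _ q ord0.
  move: sq; rewrite /sphere /= /sqnorm (bigD1 ord0) //= (bigD1 k1) //=.
  have := @sumr_ge0 _ _ (index_enum 'I_m.+2) (fun j => (j != ord0) && (j != k1))
    (fun j => q ord0 j ^+ 2) (fun j _ => sqr_ge0 _).
  set Z := \sum_(_ <- _ | _) _.
  move=> Z0 h _; apply/eqP; rewrite -sqrf_eq0 eq_le sqr_ge0 andbT.
  move: q0 Z0 h; set x := q ord0 ord0; set y := q ord0 k1 => q0 Z0 h.
  nra.
have hpr : -1 < ip p r by rewrite /p ip_ev /r mxE (_ : (ord0 == k1) = false) // ltrN10.
have hrq : -1 < ip r q by rewrite /r ip_ev q1 ltrN10.
have [S1 [c1 s1 S1p S1r]] := @path_conn _ p r (ev_sphere _ _) (ev_sphere _ _) hpr.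
have [S2 [c2 s2 S2r S2q]] := @path_conn _ r q (ev_sphere _ _) sq hrq.
exists (S1 `|` S2); last by right.
split.
- by left.
- by move=> x [] h; [exact: s1|exact: s2].
- exact: connectedU (ex_intro _ r (conj S1r S2r)) c1 c2.
Qed.




Section GroupAlg.
Set Implicit Arguments. Unset Strict Implicit.
Variable Gm : topGroup.
Implicit Types x y z g h : Gm.
Local Notation "x * y" := (tg_mul x y).
Local Notation "x ^-1" := (tg_inv x).
Local Notation one := (@tg_one Gm).

Lemma tg_mulVr x : x * x^-1 = one.
Proof.
rewrite -[x * _]tg_mul1 -(tg_mulV (x^-1)) -tg_mulA [_ * (x * _)]tg_mulA.
by rewrite tg_mulV tg_mul1 tg_mulV.
Qed.

Lemma tg_mulr1 x : x * one = x.
Proof. by rewrite -(tg_mulV x) tg_mulA tg_mulVr tg_mul1. Qed.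

Lemma tg_inv1 : one^-1 = one.
Proof. by rewrite -[one^-1]tg_mul1 tg_mulVr. Qed.

Lemma tg_invK x : (x^-1)^-1 = x.
Proof. by rewrite -[(x^-1)^-1]tg_mulr1 -(tg_mulV x) tg_mulA tg_mulV tg_mul1. Qed.

Lemma tg_mulI x y z : x * y = x * z -> y = z.
Proof.
move=> h; have := congr1 (tg_mul (x^-1)) h.
by rewrite !tg_mulA tg_mulV !tg_mul1.
Qed.

Lemma tg_invM x y : (x * y)^-1 = y^-1 * x^-1.
Proof.
apply: (@tg_mulI (x * y)); rewrite tg_mulVr tg_mulA -[x * y * y^-1]tg_mulA.
by rewrite tg_mulVr tg_mulr1 tg_mulVr.
Qed.

Definition cj g y := g^-1 * y * g.

Lemma cj1 y : cj one y = y.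
Proof. by rewrite /cj tg_inv1 tg_mul1 tg_mulr1. Qed.

Lemma cjK g y : cj (g^-1) (cj g y) = y.
Proof.
by rewrite /cj tg_invK !tg_mulA tg_mulVr tg_mul1 -tg_mulA tg_mulVr tg_mulr1.
Qed.

Lemma cjM g h y : cj h (cj g y) = cj (g * h) y.
Proof. by rewrite /cj tg_invM !tg_mulA. Qed.

End GroupAlg.
Unset Implicit Arguments. Set Strict Implicit.

Section Cells.
Context {A : topologicalType} {E : Type} {dim : E -> nat}
        (sig : forall e, 'rV[RR]_(dim e) -> A).
Hypothesis HR : is_regular_CW sig.
Set Implicit Arguments. Unset Strict Implicit.

Local Notation ocell := (ocell sig).
Local Notation ccell := (ccell sig).
Local Notation face := (face sig).
Definition bd e := sig e @` sphere (dim e).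
Definition Fs e := [set f | (bd e `&` ocell f) !=set0].

Lemma cell_cover a : exists e, ocell e a.
Proof.
case: HR => [[_ H _ _ _] _ _ _]; have [e [oe _]] := H a; by exists e.
Qed.
Lemma cell_uniq e f a : ocell e a -> ocell f a -> e = f.
Proof.
case: HR => [[_ H _ _ _] _ _ _]; have [g [_ hg]] := H a.
by move=> /hg -> /hg ->.
Qed.
Lemma ocell_ne e : ocell e (sig e 0).
Proof. by exists 0%R => //; exact: odisk0. Qed.
Lemma face_refl e : face e e.
Proof. exact: subset_closure. Qed.
Lemma face_trans f g e : face f g -> face g e -> face f e.
Proof.
move=> fg ge x /fg; rewrite (closure_id (closure (ocell e))).1; last exact: closed_closure.
exact: closureS.
Qed.
Lemma ccell_closed e : closed (ccell e).
Proof.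
case: HR => [[hA _ [hc _ _] _ _] _ _ _].
apply: compact_closed => //; apply: continuous_compact (hc e) _.
exact: disk_compact.
Qed.
Lemma ocell_ccell e : ocell e `<=` ccell e.
Proof. by move=> _ [x ox <-]; exists x => //; rewrite /disk /=; apply: ltW. Qed.
Lemma cl_ccell e : closure (ocell e) `<=` ccell e.
Proof.
rewrite [X in _ `<=` X](closure_id (ccell e)).1; last exact: ccell_closed.
exact/closureS/ocell_ccell.
Qed.
Lemma ccell_split e a : ccell e a -> ocell e a \/ bd e a.
Proof.
move=> [x dx <-]; move: dx; rewrite /disk /= le_eqVlt => /orP[/eqP h|h].
  by right; exists x.
by left; exists x.
Qed.
Lemma ccell_cl e : ccell e `<=` closure (ocell e).
Proof.
case: HR => [[_ _ _ _ hw] _ _ _].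
have := (hw (closure (ocell e))).1 (@closed_closure _ _) e.
set D := _ `&` _ => cD.
have oD : odisk (dim e) `<=` D.
  move=> x ox; split; first by rewrite /disk /=; apply: ltW.
  by apply: subset_closure; exists x.
have := closureS oD; rewrite -(closure_id D).1 // => clD.
by move=> _ [x dx <-]; have [] := clD _ (disk_cl _ _ dx).
Qed.
Lemma bd_cl e : bd e `<=` closure (ocell e).
Proof.
move=> _ [x sx <-]; apply: ccell_cl; exists x => //.
by rewrite /disk /= sx.
Qed.
Lemma bd_sub e : subcomplex sig (bd e).
Proof. by case: HR => _ _ _ h; exact: h. Qed.
Lemma bd_closed e : closed (bd e).
Proof. by case: (bd_sub e). Qed.
Lemma Fs_sub e f : Fs e f -> ocell f `<=` bd e.
Proof.
move=> [p [bp op]]; case: (bd_sub e) => _ [F FE].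
move: bp; rewrite FE => -[g Fg og].
rewrite -(cell_uniq og op) => q oq; exists g => //.
Qed.
Lemma bd_dim e f a : bd e a -> ocell f a -> (dim f < dim e)%N.
Proof.
case: HR => [[_ _ _ [hb _] _] _ _ _].
move=> [x sx <-] of'; have [g [dg og]] := hb e x sx.
by rewrite -(cell_uniq og of').
Qed.
Lemma face_meet f e a : ocell f a -> closure (ocell e) a -> face f e.
Proof.
move=> of' /cl_ccell /ccell_split [oe|be].
  by rewrite (cell_uniq of' oe); exact: face_refl.
have Ff : Fs e f by exists a.
by move=> q /(Fs_sub Ff) /bd_cl.
Qed.
Lemma face_dim f e : face f e -> f = e \/ (dim f < dim e)%N.
Proof.
move=> ffe; have := ffe _ (ocell_ne f) => /cl_ccell /ccell_split [oe|be].
  by left; exact: cell_uniq (ocell_ne f) oe.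
by right; exact: bd_dim be (ocell_ne f).
Qed.
Lemma sphere_ne n : (0 < n)%N -> exists x, sphere n x.
Proof. by case: n => // n _; exists (ev ord0); exact: ev_sphere. Qed.
Lemma Fs_dim e f : Fs e f -> (dim f < dim e)%N.
Proof. by move=> [p [bp op]]; exact: bd_dim bp op. Qed.
Lemma Fs_face e f : Fs e f -> face f e.
Proof. by move=> [p [bp op]]; exact: face_meet op (bd_cl bp). Qed.
Lemma vertex_ex e : exists v, dim v = 0%N /\ face v e.
Proof.
move: {2}(dim e) (leqnn (dim e)) => n; elim: n e => [|n IH] e.
  by rewrite leqn0 => /eqP de; exists e; split => //; exact: face_refl.
move=> den; have [d0|dpos] := posnP (dim e).
  by exists e; split => //; exact: face_refl.
have [x sx] := sphere_ne dpos.
have [f of'] := cell_cover (sig e x).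
have Ff : Fs e f by exists (sig e x); split => //; exists x.
have [v [dv fv]] := IH f (leq_trans (Fs_dim Ff) den).
by exists v; split => //; exact: face_trans fv (Fs_face Ff).
Qed.
Lemma Fs_fin e : finite_set (Fs e).
Proof. by case: HR => [[_ _ _ [_ hf] _] _ _ _]; exact: hf. Qed.
Lemma bd_conn e : (2 <= dim e)%N -> connected (bd e).
Proof.
case: HR => [[_ _ [hc _ _] _ _] _ _ _] d2.
apply: connected_continuous_connected; first exact: sphere_conn.
apply: continuous_subspaceW (hc e) => x sx; by rewrite /disk /= sx.
Qed.
Lemma vert_Fs e v : dim v = 0%N -> face v e -> (1 <= dim e)%N -> Fs e v.
Proof.
move=> dv fve de; have := fve _ (ocell_ne v) => /cl_ccell /ccell_split [oe|be].
  by move: de; rewrite -(cell_uniq (ocell_ne v) oe) dv.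
by exists (sig v 0); split => //; exact: ocell_ne.
Qed.

Definition vtx v e := dim v = 0%N /\ face v e.

Lemma vert_conn (R : E -> E -> Prop) :
  (forall v, R v v) -> (forall v w, R v w -> R w v) ->
  (forall u v w, R u v -> R v w -> R u w) ->
  forall n e, (dim e <= n)%N ->
  (forall d, dim d = 1%N -> face d e -> forall v w, vtx v d -> vtx w d -> R v w) ->
  forall v w, vtx v e -> vtx w e -> R v w.
Proof.
move=> Rr Rs Rt; elim=> [|n IH] e.
  rewrite leqn0 => /eqP de _ v w [dv fv] [dw fw].
  have [->|] := face_dim fv; last by rewrite de dv.
  have [->|] := face_dim fw; last by rewrite de dw.
  exact: Rr.
move=> den Hd.
have IHf f : (dim f <= n)%N -> face f e -> forall v w, vtx v f -> vtx w f -> R v w.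
  move=> dfn ffe; apply: IH => // d d1 dfc; apply: Hd => //; exact: face_trans ffe.
have [den'|] := leqP (dim e) n.
  exact: IHf e den' (@face_refl e).
move=> ltne; have {den ltne} de : dim e = n.+1 by apply/eqP; rewrite eqn_leq den.
case: n IH IHf de => [|n] IH IHf de.
  exact: (Hd e de (@face_refl e)).
move=> v0 w [dv0 fv0] [dw fw].
have d2 : (2 <= dim e)%N by rewrite de.
have d1 : (1 <= dim e)%N by rewrite de.
pose P (b : bool) f := exists u, vtx u f /\ (R v0 u <-> b).
pose K b := \bigcup_(f in Fs e `&` P b) closure (ocell f).
have Kcl b : closed (K b).
  apply: (@closed_bigcup _ {classic E}).
    by apply: sub_finite_set (Fs_fin e); apply: subIsetl.
  by move=> i _; exact: closed_closure.
have IHFs f : Fs e f -> forall v w, vtx v f -> vtx w f -> R v w.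
  move=> Ff; apply: IHf; last exact: Fs_face.
  by have := Fs_dim Ff; rewrite de.
have sep : separated (K false) (K true).
  rewrite /separated -!(closure_id _).1 //.
  suff dj : K false `&` K true = set0 by split => //; rewrite setIC.
  apply/seteqP; split => // p [[f1 [F1 [u1 [vu1 Pu1]]] c1] [f2 [F2 [u2 [vu2 Pu2]]] c2]].
  have [f' cf'] := cell_cover p.
  have [u [du fu]] := vertex_ex f'.
  have h1 : R u1 u := IHFs _ F1 _ _ vu1 (conj du (face_trans fu (face_meet cf' c1))).
  have h2 : R u2 u := IHFs _ F2 _ _ vu2 (conj du (face_trans fu (face_meet cf' c2))).
  have : R v0 u1 := Rt _ _ _ (proj2 Pu2 erefl) (Rt _ _ _ h2 (Rs _ _ h1)).
  by move/Pu1.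
have cov : bd e `<=` K false `|` K true.
  move=> p bp; have [f cf] := cell_cover p.
  have Ff : Fs e f by exists p.
  have [u [du fu]] := vertex_ex f.
  have [r|nr] := pselect (R v0 u).
    by right; exists f; [split=> //; exists u; split|exact: subset_closure].
  by left; exists f; [split=> //; exists u; split|exact: subset_closure].
have Fv0 := vert_Fs dv0 fv0 d1.
have bv0 : bd e (sig v0 0) := Fs_sub Fv0 (ocell_ne v0).
have [sub|sub] := connected_subset sep cov (bd_conn d2).
  have [f [Ff [u [vu Pu]]] cf] := sub _ bv0.
  have : R u v0 := IHFs _ Ff _ _ vu (conj dv0 (face_meet (ocell_ne v0) cf)).
  by move/Rs/Pu.
have Fw := vert_Fs dw fw d1.
have [f [Ff [u [vu Pu]]] cf] := sub _ (Fs_sub Fw (ocell_ne w)).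
have : R u w := IHFs _ Ff _ _ vu (conj dw (face_meet (ocell_ne w) cf)).
by apply: Rt; apply/Pu.
Qed.


Context {Gam : topGroup} (I : set (Gam * A)) (HI : cellular_groupoid sig I)
  {G : topGroup}.
Local Notation Ic := (Icell sig I).

Lemma Icell_face v e : face v e -> Ic e `<=` Ic v.
Proof.
move=> fve x [a [oa Ixa]].
have bcl : closure (ocell e) (sig v 0) := fve _ (ocell_ne v).
case: HI => _ Hcell Hlm.
have [U [oU Ub _ [rho [_ _ _ rho1 rhoI]]]] := Hlm (sig v 0) setT filterT.
have [u [ou Uu]] := bcl U (open_nbhs_nbhs (conj oU Ub)).
exists (sig v 0); split; first exact: ocell_ne.
rewrite -(rho1 u Uu).
have : fiber I u x by rewrite -(Hcell e a u oa ou).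
apply: (rhoI 1%R u _ Uu).
by rewrite Num.Theory.ler01 Order.POrderTheory.lexx.
Qed.

Definition vert e : E := projT1 (cid (vertex_ex e)).
Lemma vertP e : vtx (vert e) e.
Proof. exact: (projT2 (cid (vertex_ex e))). Qed.

Lemma hc_sub (H H' : set Gam) (phi psi : Gam -> G) :
  H' `<=` H -> hom_conj H phi psi -> hom_conj H' phi psi.
Proof. by move=> HH [g hg]; exists g => x /HH; exact: hg. Qed.

Lemma ch_sub (H H' : set Gam) (phi : Gam -> G) :
  H' `<=` H -> cont_hom H phi -> cont_hom H' phi.
Proof.
move=> HH [hm hc]; split; first by move=> x y /HH hx /HH hy; exact: hm.
exact: continuous_subspaceW hc.
Qed.

Lemma hc_refl (H : set Gam) (phi : Gam -> G) : hom_conj H phi phi.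
Proof. by exists tg_one => x _; rewrite -/(cj _ _) cj1. Qed.

Lemma hc_sym (H : set Gam) (phi psi : Gam -> G) :
  hom_conj H phi psi -> hom_conj H psi phi.
Proof.
by move=> [g hg]; exists (tg_inv g) => x Hx; rewrite hg // -!/(cj _ _) cjK.
Qed.

Lemma hc_trans (H : set Gam) (phi psi chi : Gam -> G) :
  hom_conj H phi psi -> hom_conj H psi chi -> hom_conj H phi chi.
Proof.
move=> [g hg] [h hh]; exists (tg_mul g h) => x Hx.
by rewrite hh // hg // -!/(cj _ _) cjM.
Qed.


Theorem main_thm :
  ((forall beta beta' : E -> Gam -> G,
      cell_rep sig I allcells beta -> cell_rep sig I allcells beta' ->
      rep_conj sig I (skel dim 0) beta beta' -> rep_conj sig I allcells beta beta') /\
   (forall b b' : E -> Gam -> G,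
      bar_rep sig I allcells b -> bar_rep sig I allcells b' ->
      bar_eq sig I (skel dim 0) b b' -> bar_eq sig I allcells b b')) /\
  ((forall beta beta' : E -> Gam -> G,
      cell_rep sig I allcells beta -> cell_rep sig I allcells beta' ->
      rep_conj sig I (skel dim 1) beta beta' -> rep_conj sig I allcells beta beta') /\
   (forall gam : E -> Gam -> G, cell_rep sig I (skel dim 1) gam ->
      exists beta : E -> Gam -> G,
        cell_rep sig I allcells beta /\ rep_conj sig I (skel dim 1) beta gam) /\
   (forall b b' : E -> Gam -> G,
      bar_rep sig I allcells b -> bar_rep sig I allcells b' ->
      bar_eq sig I (skel dim 1) b b' -> bar_eq sig I allcells b b') /\
   (forall c : E -> Gam -> G, bar_rep sig I (skel dim 1) c ->
      exists b : E -> Gam -> G,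
        bar_rep sig I allcells b /\ bar_eq sig I (skel dim 1) b c)).
Proof.
have s01 e : skel dim 0 e -> skel dim 1 e by rewrite /skel => /leq_trans; apply.
have sv e : skel dim 0 (vert e) by rewrite /skel (proj1 (vertP e)).
have sv1 e : skel dim 1 (vert e) by apply: s01.
have IcV e : Ic e `<=` Ic (vert e) := Icell_face (proj2 (vertP e)).
have repA : forall beta beta' : E -> Gam -> G,
      cell_rep sig I allcells beta -> cell_rep sig I allcells beta' ->
      rep_conj sig I (skel dim 0) beta beta' -> rep_conj sig I allcells beta beta'.
  move=> beta beta' [_ cb] [_ cb'] [g hg]; exists g => e _ x Ix.
  have fv := proj2 (vertP e).
  rewrite (cb' _ _ Logic.I Logic.I fv x Ix) (cb _ _ Logic.I Logic.I fv x Ix).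
  exact: hg (sv e) x (IcV e x Ix).
have barA : forall b b' : E -> Gam -> G,
      bar_rep sig I allcells b -> bar_rep sig I allcells b' ->
      bar_eq sig I (skel dim 0) b b' -> bar_eq sig I allcells b b'.
  move=> b b' [_ cb] [_ cb'] hb e _.
  have fv := proj2 (vertP e).
  apply: (hc_trans _ (cb' _ _ Logic.I Logic.I fv)).
  apply: (hc_trans (hc_sym (cb _ _ Logic.I Logic.I fv))).
  exact: hc_sub (IcV e) (hb _ (sv e)).
split; first by split.
split.
  move=> beta beta' cb cb' [g hg]; apply: repA => //; exists g => e se.
  exact: hg (s01 e se).
split.
  move=> gam [hg cg]; exists (fun e => gam (vert e)); split; last first.
    exists tg_one => e se x Ix; rewrite -/(cj _ _) cj1.
    exact: cg _ _ (sv1 e) se (proj2 (vertP e)) x Ix.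
  split=> [e _|f e _ _ ffe x Ix].
    exact: ch_sub (IcV e) (hg _ (sv1 e)).
  pose R v w := forall y, Ic e y -> gam v y = gam w y.
  have Rr : forall v, R v v by [].
  have Rs : forall v w, R v w -> R w v by move=> v w h y Iy; rewrite h.
  have Rt : forall u v w, R u v -> R v w -> R u w.
    by move=> u v w h1 h2 y Iy; rewrite h1 // h2.
  have Hd : forall d, dim d = 1%N -> face d e -> forall v w, vtx v d -> vtx w d -> R v w.
    move=> d d1 fde v w [dv fvd] [dw fwd] y Iy.
    have Idy := Icell_face fde Iy.
    have sd : skel dim 1 d by rewrite /skel d1.
    have svv : skel dim 1 v by rewrite /skel dv.
    have sww : skel dim 1 w by rewrite /skel dw.
    by rewrite -(cg _ _ svv sd fvd y Idy) (cg _ _ sww sd fwd y Idy).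
  exact: (vert_conn Rr Rs Rt (leqnn (dim e)) Hd (vertP e)
           (conj (proj1 (vertP f)) (face_trans (proj2 (vertP f)) ffe))).
split.
  move=> b b' cb cb' hb; apply: barA => // e se; exact: hb (s01 e se).
move=> c [hc cc]; exists (fun e => c (vert e)); split; last first.
  by move=> e se; exact: cc _ _ (sv1 e) se (proj2 (vertP e)).
split=> [e _|f e _ _ ffe].
  exact: ch_sub (IcV e) (hc _ (sv1 e)).
pose R v w := hom_conj (Ic e) (c v) (c w).
have Rr : forall v, R v v by move=> v; exact: hc_refl.
have Rs : forall v w, R v w -> R w v by move=> v w; exact: hc_sym.
have Rt : forall u v w, R u v -> R v w -> R u w by move=> u v w; exact: hc_trans.
have Hd : forall d, dim d = 1%N -> face d e -> forall v w, vtx v d -> vtx w d -> R v w.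
  move=> d d1 fde v w [dv fvd] [dw fwd].
  have sd : skel dim 1 d by rewrite /skel d1.
  have svv : skel dim 1 v by rewrite /skel dv.
  have sww : skel dim 1 w by rewrite /skel dw.
  apply: hc_sub (Icell_face fde) _.
  exact: hc_trans (cc _ _ svv sd fvd) (hc_sym (cc _ _ sww sd fwd)).
exact: (vert_conn Rr Rs Rt (leqnn (dim e)) Hd
           (conj (proj1 (vertP f)) (face_trans (proj2 (vertP f)) ffe)) (vertP e)).
Qed.

End Cells.
Unset Implicit Arguments. Set Strict Implicit.

End Aux.

Theorem proposition5p2 (Gam : topGroup) (A : topologicalType) (E : Type)
  (dim : E -> nat) (sig : forall e, 'rV[RR]_(dim e) -> A)
  (I : set (Gam * A)) (G : topGroup) :
  is_regular_CW sig -> cellular_groupoid sig I ->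
  (* (a) res_0 injective on Rep and on \bar{Rep} *)
  ((forall beta beta' : E -> Gam -> G,
      cell_rep sig I allcells beta -> cell_rep sig I allcells beta' ->
      rep_conj sig I (skel dim 0) beta beta' -> rep_conj sig I allcells beta beta') /\
   (forall b b' : E -> Gam -> G,
      bar_rep sig I allcells b -> bar_rep sig I allcells b' ->
      bar_eq sig I (skel dim 0) b b' -> bar_eq sig I allcells b b')) /\
  (* (b) res_1 bijective on Rep and on \bar{Rep} *)
  ((forall beta beta' : E -> Gam -> G,
      cell_rep sig I allcells beta -> cell_rep sig I allcells beta' ->
      rep_conj sig I (skel dim 1) beta beta' -> rep_conj sig I allcells beta beta') /\
   (forall gam : E -> Gam -> G, cell_rep sig I (skel dim 1) gam ->
      exists beta : E -> Gam -> G,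
        cell_rep sig I allcells beta /\ rep_conj sig I (skel dim 1) beta gam) /\
   (forall b b' : E -> Gam -> G,
      bar_rep sig I allcells b -> bar_rep sig I allcells b' ->
      bar_eq sig I (skel dim 1) b b' -> bar_eq sig I allcells b b') /\
   (forall c : E -> Gam -> G, bar_rep sig I (skel dim 1) c ->
      exists b : E -> Gam -> G,
        bar_rep sig I allcells b /\ bar_eq sig I (skel dim 1) b c)).
Proof.
move=> HR HI; exact: (@Aux.main_thm A E dim sig HR Gam I HI G).
Qed.
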